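(* For every typed DAG task $G=(V,E,\gamma,c)$ and every platform with $M_s\ge1$ cores of each type $s\in S$, \[ len(\hat G)+\sum_{s\in S}\frac{vol_s(G)}{M_s}\;\le\;\Big(1-\frac{1}{\max_{s\in S}M_s}\Big)len(G)+\sum_{s\in S}\frac{vol_s(G)}{M_s}, \] and there exist typed DAG tasks and platforms for which this inequality is strict.
   Context: A typed DAG task is $G=(V,E,\gamma,c)$ where $(V,E)$ is a finite directed acyclic graph with a unique source and a unique sink, $S$ is a finite set of core types, $\gamma:V\to S$ gives the type of each vertex, and $c:V\to\mathbb{R}_{\ge0}$ gives the WCET of each vertex. The platform has $M_s\ge1$ cores of type $s$. $vol_s(G)=\sum_{u\in V,\gamma(u)=s}c(u)$. For a path $\pi$, $len(\pi)=\sum_{u\in\pi}c(u)$ and $len(G)$ is the maximum of $len(\pi)$ over paths of $G$. The scaled graph $\hat G$ has the same vertices, edges and types as $G$ with weights $\hat c(v)=c(v)(1-1/M_{\gamma(v)})$, and $len(\hat G)$ is its longest path length with respect to $\hat c$. (The left-hand side is the bound called NEW-B-1, the right-hand side the earlier bound called OLD-B; the paper states ''NEW-B-1 strictly dominates OLD-B''.) *)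

(* Defs.v *)
From HB Require Import structures.
From mathcomp Require Import all_boot all_order all_algebra.
Set Implicit Arguments. Unset Strict Implicit. Unset Printing Implicit Defensive.
Import Order.TTheory GRing.Theory Num.Theory.
Local Open Scope ring_scope.

(* Typed DAG tasks.  Vertices: a finType V; edges: a relation E on V;
   core types: a finType S; typing gamma : V -> S; WCETs c : V -> R. *)

Definition acyclic (V : finType) (E : rel V) : Prop :=
  forall u v, E u v -> ~~ connect E v u.

Definition is_source (V : finType) (E : rel V) (v : V) : bool :=
  [forall u, ~~ E u v].
Definition is_sink (V : finType) (E : rel V) (v : V) : bool :=
  [forall u, ~~ E v u].

Definition typed_dag (V : finType) (E : rel V) : Prop :=
  [/\ acyclic E,
      exists! v, is_source E v &
      exists! v, is_sink E v].

Definition is_dag_path (V : finType) (E : rel V) (p : seq V) : bool :=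
  if p is x :: q then path E x q else false.

Definition path_len (R : numDomainType) (V : finType) (c : V -> R) (p : seq V) : R :=
  \sum_(u <- p) c u.

(* In a DAG every path is duplicate-free, hence has at most #|V| vertices,
   so enumerating tuples of size <= #|V| enumerates all paths. *)
Definition dag_len (R : realDomainType) (V : finType) (E : rel V) (c : V -> R) : R :=
  \big[Num.max/0]_(n < #|V|.+1)
     \big[Num.max/0]_(t : n.-tuple V | is_dag_path E t) path_len c t.

Definition vol (R : numDomainType) (V S : finType) (gamma : V -> S) (c : V -> R) (s : S) : R :=
  \sum_(u | gamma u == s) c u.

Definition scaled_wcet (R : numFieldType) (V S : finType) (gamma : V -> S)
    (c : V -> R) (M : S -> nat) : V -> R :=
  fun v => c v * (1 - ((M (gamma v))%:R)^-1).

Definition new_b1 (R : realFieldType) (V S : finType) (E : rel V) (gamma : V -> S)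
    (c : V -> R) (M : S -> nat) : R :=
  dag_len E (scaled_wcet gamma c M) + \sum_(s : S) vol gamma c s / (M s)%:R.

Definition old_b (R : realFieldType) (V S : finType) (E : rel V) (gamma : V -> S)
    (c : V -> R) (M : S -> nat) : R :=
  (1 - ((\max_(s : S) M s)%N)%:R^-1) * dag_len E c
  + \sum_(s : S) vol gamma c s / (M s)%:R.

Definition valid_instance (R : realFieldType) (V S : finType) (E : rel V)
    (c : V -> R) (M : S -> nat) : Prop :=
  [/\ typed_dag E, forall v, 0 <= c v & forall s, (0 < M s)%N].

(* Main.v *)
Require Import Defs.
From HB Require Import structures.
From mathcomp Require Import all_boot all_order all_algebra.
Import Order.TTheory GRing.Theory Num.Theory.
Local Open Scope ring_scope.

Lemma dag_len_ub (R : realDomainType) (V : finType) (E : rel V) (c : V -> R) X :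
  0 <= X ->
  (forall n (t : n.-tuple V), (n <= #|V|)%N -> is_dag_path E t -> path_len c t <= X) ->
  dag_len E c <= X.
Proof.
move=> X0 H; rewrite /dag_len; apply: bigmax_le => // n _.
apply: bigmax_le => // t Ht; apply: H => //; rewrite -ltnS; exact: ltn_ord.
Qed.

Lemma dag_len_lb (R : realDomainType) (V : finType) (E : rel V) (c : V -> R) n (t : n.-tuple V) :
  (n <= #|V|)%N -> is_dag_path E t -> path_len c t <= dag_len E c.
Proof.
move=> Hn Ht; rewrite /dag_len.
have Hn' : (n < #|V|.+1)%N by [].
apply: le_trans (le_bigmax _ _ (Ordinal Hn')).
exact: (le_bigmax_cond _ (P := fun t : n.-tuple V => is_dag_path E t)).
Qed.

Lemma dag_len_ge0 (R : realDomainType) (V : finType) (E : rel V) (c : V -> R) :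
  0 <= dag_len E c.
Proof.
rewrite /dag_len; have H0 : (0 < #|V|.+1)%N by [].
apply: le_trans (le_bigmax _ _ (Ordinal H0)).
rewrite /=; elim/big_rec: _ => //= i x _ hx; by rewrite le_max hx orbT.
Qed.

Theorem corollary1 (R : realFieldType) :
  (forall (V S : finType) (E : rel V) (gamma : V -> S) (c : V -> R) (M : S -> nat),
      valid_instance E c M ->
      new_b1 E gamma c M <= old_b E gamma c M)
  /\
  (exists (V S : finType) (E : rel V) (gamma : V -> S) (c : V -> R) (M : S -> nat),
      valid_instance E c M /\
      new_b1 E gamma c M < old_b E gamma c M).
Proof.
split.
  move=> V S E gamma c M [_ c0 M0]; rewrite /new_b1 /old_b lerD2r.
  set k := 1 - _.
  have Hv v : scaled_wcet gamma c M v <= k * c v.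
    rewrite /scaled_wcet mulrC ler_wpM2r // lerD2l lerN2.
    have h1 : (0 < (M (gamma v))%:R :> R) by rewrite ltr0n.
    have hm : (M (gamma v) <= \max_(s : S) M s)%N by exact: leq_bigmax.
    have h2 : (0 < (\max_(s : S) M s)%N%:R :> R) by rewrite ltr0n (leq_trans (M0 _) hm).
    by rewrite lef_pV2 // ler_nat.
  have k0 : 0 <= k.
    rewrite /k subr_ge0.
    case: (posnP (\max_(s : S) M s)) => [->|hp]; first by rewrite invr0 ler01.
    by rewrite invf_le1 ?ler1n ?ltr0n.
  apply: dag_len_ub; first by rewrite mulr_ge0 // dag_len_ge0.
  move=> n t hn ht; apply: (@le_trans _ _ (k * path_len c t)).
    by rewrite /path_len mulr_sumr; apply: ler_sum => i _.
  by rewrite ler_wpM2l // dag_len_lb.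
exists unit, bool, (fun _ _ => false), (fun _ => false),
  (fun _ => 1), (fun b => if b then 2%N else 1%N).
split.
  split; [split|by []|by case].
  - by move=> u v.
  - by exists tt; split; [apply/forallP|case].
  - by exists tt; split; [apply/forallP|case].
rewrite /new_b1 /old_b ltrD2r.
have -> : dag_len (fun _ _ : unit => false)
    (scaled_wcet (fun _ : unit => false) (fun _ : unit => 1 : R) (fun b : bool => if b then 2%N else 1%N)) = 0.
  apply/eqP; rewrite eq_le dag_len_ge0 andbT; apply: dag_len_ub => // n t _ _.
  by rewrite /path_len big1 // => i _; rewrite /scaled_wcet /= invr1 subrr mulr0.
have hmax : (\max_(s : bool) (if s then 2%N else 1%N) = 2)%N.
  by rewrite (bigD1 true) //= (bigD1 false) //= big_pred0 // => b; case: b.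
rewrite hmax.
have t1 : size [:: tt] == 1%N by [].
have := @dag_len_lb R _ (fun _ _ : unit => false) (fun _ => 1) 1 (Tuple t1) (eq_leq (esym card_unit)) erefl.
rewrite /path_len /= big_seq1 => h.
apply: mulr_gt0; last exact: lt_le_trans h.
by rewrite subr_gt0 invf_lt1 // ltr1n.
Qed.
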